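(* Let $n,d\ge 2$, and let $0\le a<b\le d$. Let $\boldsymbol\gamma_a\in\mathbb{R}^{\binom{n+a-1}{a}}$ and $\boldsymbol\gamma_b\in\mathbb{R}^{\binom{n+b-1}{b}}$ be nonnegative vectors with $R(\boldsymbol\gamma_a)=R(\boldsymbol\gamma_b)=1$, and set $$\mathbf v=(-1)^{d-a}J_{n,d}J_{n,d-1}\cdots J_{n,a}\boldsymbol\gamma_a+(-1)^{d-b}J_{n,d}J_{n,d-1}\cdots J_{n,b}\boldsymbol\gamma_b.$$ If $\mathbf v\ge 0$, then $R(\mathbf v)\ge \binom{n+2}{3}-1$.
   Context: For a real vector $\mathbf x$, $R(\mathbf x)$ is the number of nonzero components; inequalities are componentwise. For $j\ge 0$, $J_{n,j}$ is the matrix, with respect to the left lexicographic bases of degree-$j$ and degree-$(j+1)$ monomials in $x_1,\dots,x_n$, of the linear map $A(x)\mapsto A(x)(x_1+\cdots+x_n)$; so $J_{n,d}\cdots J_{n,a}\boldsymbol\gamma$ is the coefficient vector of $G(x)(x_1+\cdots+x_n)^{d-a+1}$ where $G$ has coefficient vector $\boldsymbol\gamma$. *)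

(* Defs.v *)
From mathcomp Require Import all_boot all_order all_algebra.
From mathcomp Require Import mpoly.
Set Implicit Arguments. Unset Strict Implicit. Unset Printing Implicit Defensive.
Import Order.TTheory GRing.Theory Num.Theory.
Local Open Scope ring_scope.

(* A real vector indexed by the degree-j monomials in x_1..x_n is identified
   with the homogeneous polynomial of degree j having these coefficients
   (the coordinate of monomial m is p@_m). *)

Definition sumX (R : nzRingType) (n : nat) : {mpoly R[n]} := \sum_(i < n) 'X_i.

(* J_{n,j} : the linear map A(x) |-> A(x) (x_1 + ... + x_n) (its matrix in
   the monomial bases is J_{n,j}); it does not depend on j as a map. *)
Definition Jmap (R : nzRingType) (n : nat) (A : {mpoly R[n]}) : {mpoly R[n]} :=
  A * sumX R n.

Definition Jprod (R : nzRingType) (n a d : nat) (A : {mpoly R[n]}) : {mpoly R[n]} :=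
  iter (d - a).+1 (@Jmap R n) A.

Definition nonneg_vec (R : numDomainType) (n : nat) (p : {mpoly R[n]}) : Prop :=
  forall m, 0 <= p@_m.

Definition nnz (R : nzRingType) (n : nat) (p : {mpoly R[n]}) : nat := size (msupp p).

(* Main.v *)
Require Import Defs.
Require Import Defs.
From mathcomp Require Import all_boot all_order all_algebra.
From mathcomp Require Import mpoly.
From mathcomp Require Import zify ring lra.
Set Implicit Arguments. Unset Strict Implicit. Unset Printing Implicit Defensive.
Import Order.TTheory GRing.Theory Num.Theory.
Local Open Scope ring_scope.

Section Aux.
Variable (R : realFieldType) (n : nat).
Implicit Types (i j : 'I_n).
Implicit Types (p : {mpoly R[n]}) (m k g x y z : 'X_{1..n}).

Lemma coefMX p m k : (p * 'X_[m])@_k = if (m <= k)%MM then p@_(k - m)%MM else 0.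
Proof.
case: ifP => hm.
  by rewrite -{1}[k](submK hm) addmC; apply: mcoeffMX.
apply/eqP; rewrite mcoeff_eq0.
rewrite (perm_mem (msuppMX p m)); apply/negP => /mapP [m' _ hk].
by rewrite hk lem_addr in hm.
Qed.

Notation S := (sumX R n).

Lemma coefMS p g : (p * S)@_g =
  \sum_(i < n) (if (U_(i) <= g)%MM then p@_(g - U_(i))%MM else 0).
Proof.
rewrite /sumX mulr_sumr raddf_sum; apply: eq_bigr => i _; exact: coefMX.
Qed.

Lemma mdeg_sub1 g i : (U_(i) <= g)%MM -> mdeg g = (mdeg (g - U_(i))%MM).+1.
Proof. by move=> h; rewrite -{1}(submK h) mdegD mdeg1 addn1. Qed.

Lemma A_ge0 (k : nat) g : 0 <= (S ^+ k)@_g.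
Proof.
elim: k g => [|k IH] g; first by rewrite expr0 mcoeff1 ler0n.
rewrite exprSr coefMS; apply: sumr_ge0 => i _; case: ifP => //.
Qed.

Lemma A_gt0 (k : nat) g : mdeg g = k -> 0 < (S ^+ k)@_g.
Proof.
elim: k g => [|k IH] g hg.
  rewrite expr0 mcoeff1; move/eqP: hg; rewrite mdeg_eq0 => ->; exact: ltr01.
have [i hi] : exists i, g i != 0%N.
  apply/existsP; apply: contraT; rewrite negb_exists => /forallP h.
  have : mdeg g = 0%N by rewrite mdegE big1 // => i _; apply/eqP; move: (h i); rewrite negbK.
  by rewrite hg.
have hu : (U_(i) <= g)%MM by rewrite lep1mP.
rewrite exprSr coefMS (bigD1 i) //= hu.
apply: ltr_wpDr.
  by apply: sumr_ge0 => j _; case: ifP => // _; exact: A_ge0.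
by apply: IH; move: hg; rewrite (mdeg_sub1 hu); case.
Qed.

Lemma dS i : S^`M(i) = 1.
Proof.
rewrite /sumX raddf_sum (bigD1 i) //= big1 ?addr0.
  rewrite mderivX mnm1E eqxx.
  rewrite [X in 'X_[X]](_ : _ = 0%MM) ?mpolyX0 ?scale1r //.
  by apply/mnmP => j; rewrite !mnmE subnn.
move=> j hj; rewrite mderivX mnm1E (negbTE hj) scale0r //.
Qed.

Lemma dSk (k : nat) i j : (S ^+ k)^`M(i) = (S ^+ k)^`M(j).
Proof.
elim: k => [|k IH]; first by rewrite expr0 -mpolyC1 !mderivC.
by rewrite exprSr !mderivM IH !dS.
Qed.

Lemma A_deriv (k : nat) g i j :
  (S ^+ k)@_(g + U_(i))%MM *+ (g i).+1 = (S ^+ k)@_(g + U_(j))%MM *+ (g j).+1.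
Proof. by rewrite -!mcoeff_mderiv (dSk k i j). Qed.

Lemma iterJ (k : nat) p : iter k (@Jmap R n) p = p * S ^+ k.
Proof.
elim: k => [|k IH] /=; first by rewrite expr0 mulr1.
by rewrite IH /Jmap exprSr mulrA.
Qed.

Lemma count_supp (s : seq 'X_{1..n}) (f : 'X_{1..n} -> 'X_{1..n}) x0 p :
  uniq s -> injective f -> (forall x, x \in s -> x != x0 -> p@_(f x) != 0) ->
  (size s - 1 <= size (msupp p))%N.
Proof.
move=> us injf hf.
pose s' := filter (predC1 x0) s.
have h1 : (size s - 1 <= size s')%N.
  rewrite /s' size_filter.
  have := count_predC (pred1 x0) s.
  have := count_uniq_mem x0 us.
  have -> : count (predC (pred1 x0)) s = count (predC1 x0) s by apply: eq_count.
  rewrite /= => ->; case: (x0 \in s) => /=; lia.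
have h2 : (size (map f s') <= size (msupp p))%N.
  apply: uniq_leq_size; first by rewrite (map_inj_uniq injf) filter_uniq.
  move=> y /mapP [x]; rewrite mem_filter => /andP [hx xs] ->.
  by rewrite mcoeff_msupp; apply: hf.
by rewrite size_map in h2; apply: (leq_trans h1).
Qed.

Lemma le_two x y i j (k : nat) : i != j ->
  (x <= y + U_(i) *+ k)%MM -> (x <= y + U_(j) *+ k)%MM -> (x <= y)%MM.
Proof.
move=> hij /mnm_lepP h1 /mnm_lepP h2; apply/mnm_lepP => l.
move: (h1 l) (h2 l); rewrite !mnmDE !mulmnE !mnm1E.
case: (eqVneq i l) => [eil|nil]; case: (eqVneq j l) => [ejl|njl] /=; try lia.
by move: hij; rewrite eil ejl eqxx.
Qed.

Lemma mdeg_le x y : (x <= y)%MM -> (mdeg x <= mdeg y)%N.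
Proof. by move=> h; rewrite -(submK h) mdegD leq_addl. Qed.

Lemma eq_le_mdeg x y : (x <= y)%MM -> (mdeg y <= mdeg x)%N -> x = y.
Proof.
move=> h; rewrite -{1}(submK h) mdegD => hd.
have /eqP : mdeg (y - x)%MM = 0%N by lia.
rewrite mdeg_eq0 => /eqP h0.
by rewrite -(submK h) h0 add0m.
Qed.

Lemma lem_add2r x y z : ((x + z)%MM <= (y + z)%MM)%MM = (x <= y)%MM.
Proof.
apply/mnm_lepP/mnm_lepP => h l; move: (h l); rewrite ?mnmDE; lia.
Qed.

Lemma subm_add2r x y z : ((x + z) - (y + z) = x - y)%MM.
Proof. by apply/mnmP => l; rewrite !mnmE; lia. Qed.

Lemma mdegU i (k : nat) : mdeg (U_(i) *+ k)%MM = k.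
Proof. by rewrite mdegMn mdeg1 mul1n. Qed.


Lemma coef_lin (x y : R) p q m : (x *: p + y *: q)@_m = x * p@_m + y * q@_m.
Proof. by rewrite mcoeffD !mcoeffZ. Qed.

Lemma coefJ (k : nat) (x : R) a m :
  ((x *: 'X_[a]) * S ^+ k)@_m = x * (if (a <= m)%MM then (S ^+ k)@_(m - a)%MM else 0).
Proof. by rewrite -scalerAl mcoeffZ [('X_[a] * _)]mulrC coefMX. Qed.

Lemma coef_v (x y x' y' : R) a a' (k k' : nat) m :
  (x *: (y *: 'X_[a] * S ^+ k) + x' *: (y' *: 'X_[a'] * S ^+ k'))@_m =
  x * y * (if (a <= m)%MM then (S ^+ k)@_(m - a)%MM else 0) +
  x' * y' * (if (a' <= m)%MM then (S ^+ k')@_(m - a')%MM else 0).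
Proof. by rewrite coef_lin !coefJ !mulrA. Qed.

Lemma ex_arith (c e a1 a2 b1 b2 x y w : R) : 0 < c -> 0 < e -> 0 < b2 -> 0 < x ->
  0 <= w -> w < y -> a1 * x = a2 * y -> b1 * x = b2 * w ->
  0 <= c * a2 - e * b2 -> 0 < c * a1 - e * b1.
Proof.
move=> hc he hb2 hx hw hyw d1 d2 h'.
rewrite -(pmulr_lgt0 _ hx).
have -> : (c * a1 - e * b1) * x = (c * a2 - e * b2) * y + e * b2 * (y - w).
  by rewrite mulrBl -!mulrA d1 d2; ring.
apply: ltr_wpDl.
  by apply: mulr_ge0 => //; apply: (le_trans hw (ltW hyw)).
by apply: mulr_gt0; [exact: mulr_gt0 | rewrite subr_gt0].
Qed.
End Aux.

Definition mons n d := [seq s2m t | t : d.-tuple 'I_n <- enum (basis n d)].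

Lemma mons_mem n d m : (m \in mons n d) = (mdeg m == d).
Proof. by rewrite basis_cover. Qed.

Lemma mons_uniq n d : uniq (mons n d).
Proof. exact: uniq_basis. Qed.

Lemma mons_size n d : size (mons n.+1 d) = 'C(d + n, d).
Proof. exact: size_basis. Qed.


Lemma single_supp (R : realFieldType) (n : nat) (g : {mpoly R[n]}) :
  nonneg_vec g -> nnz g = 1%N ->
  exists c a, 0 < c /\ g = c *: 'X_[a] /\ msupp g = [:: a].
Proof.
move=> hnn; rewrite /nnz; case E: (msupp g) => [|al [|? ?]] //= _.
exists g@_al, al; split; last split => //.
  by rewrite lt_def hnn andbT -mcoeff_msupp E mem_head.
by rewrite {1}(mpolyE g) E big_seq1.
Qed.

Lemma mons_size' n d : (0 < n)%N -> size (mons n d) = 'C(d + n - 1, d).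
Proof. by case: n => // n _; rewrite mons_size; congr binomial; lia. Qed.

Theorem lemma5p4 (R : realFieldType) (n d a b : nat)
  (hn : (2 <= n)%N) (hd : (2 <= d)%N) (hab : (a < b)%N) (hbd : (b <= d)%N)
  (ga gb : {mpoly R[n]})
  (ha_hom : ga \is (a).-homog) (hb_hom : gb \is (b).-homog)
  (ha_nn : nonneg_vec ga) (hb_nn : nonneg_vec gb)
  (ha_R : nnz ga = 1%N) (hb_R : nnz gb = 1%N) :
  let v := (-1) ^+ (d - a) *: Jprod a d ga + (-1) ^+ (d - b) *: Jprod b d gb in
  nonneg_vec v -> ('C(n + 2, 3) - 1 <= nnz v)%N.
Proof.
move=> v hv.
have [c [al [hc [gaE saE]]]] := single_supp ha_nn ha_R.
have [e [be [he [gbE sbE]]]] := single_supp hb_nn hb_R.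
have hal : mdeg al = a.
  by move/dhomogP: ha_hom => /(_ al); rewrite saE mem_head => /(_ isT).
have hbe : mdeg be = b.
  by move/dhomogP: hb_hom => /(_ be); rewrite sbE mem_head => /(_ isT).
set K := (d - a).+1. set L := (d - b).+1.
pose S := sumX R n.
have vE : forall mu, v@_mu = (-1) ^+ (d - a) * c *
      (if (al <= mu)%MM then (S ^+ K)@_(mu - al)%MM else 0)
    + (-1) ^+ (d - b) * e * (if (be <= mu)%MM then (S ^+ L)@_(mu - be)%MM else 0).
  move=> mu; rewrite /v /Jprod (iterJ _ ga) (iterJ _ gb) gaE gbE; exact: coef_v.
have i0lt : (0 < n)%N by apply: ltnW.
pose i0 : 'I_n := Ordinal i0lt.
pose i1 : 'I_n := Ordinal hn.
have i01 : i0 != i1 by [].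
have sgE : forall k, (-1) ^+ k = (if odd k then -1 else 1 : R).
  by move=> k; rewrite -signr_odd; case: odd.
have hpar : odd (d - a) = odd (d - b) (+) odd (b - a).
  by rewrite -oddD; congr odd; lia.
have hKL : K = (L + (b - a))%N by rewrite /K /L; lia.
have hsz : 'C(n + 2, 3) = size (mons n 3) by rewrite mons_size' //; congr binomial; lia.
rewrite hsz.
case hoa : (odd (d - a)).
  exfalso.
  have [i hi] : exists i : 'I_n, ~~ (be <= al + U_(i) *+ K)%MM.
    case h0 : (be <= al + U_(i0) *+ K)%MM; last by exists i0; rewrite h0.
    case h1 : (be <= al + U_(i1) *+ K)%MM; last by exists i1; rewrite h1.
    have := mdeg_le (le_two i01 h0 h1); rewrite hal hbe; lia.
  have hA : 0 < (S ^+ K)@_(U_(i) *+ K)%MM by apply: A_gt0; rewrite mdegU.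
  have := hv (al + U_(i) *+ K)%MM.
  rewrite vE lem_addr (negbTE hi) sgE hoa [(al + _)%MM]addmC addmK mulr0 addr0 mulN1r.
  by rewrite mulNr oppr_ge0 leNgt (mulr_gt0 hc hA).
have sgA : (-1) ^+ (d - a) = 1 :> R by rewrite sgE hoa.
case hob : (odd (d - b)); last first.
  have sbE' : (-1) ^+ (d - b) = 1 :> R by rewrite sgE hob.
  have hodd : odd (b - a) = false by move: hpar; rewrite hoa hob.
  have hba : (b - a != 1)%N by apply/eqP => h; rewrite h in hodd.
  have hK3 : (3 <= K)%N by rewrite hKL /L; lia.
  apply: (@count_supp R n (mons n 3) (fun t => (t + U_(i0) *+ (K - 3)) + al)%MM 0%MM v
     (mons_uniq n 3)).
    by move=> t1 t2 /addIm /addIm.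
  move=> t; rewrite mons_mem => /eqP ht _.
  rewrite vE lem_addl addmK sgA sbE' !mul1r.
  apply: lt0r_neq0.
  have h1 : 0 < c * (S ^+ K)@_(t + U_(i0) *+ (K - 3))%MM.
    by apply: mulr_gt0 => //; apply: A_gt0; rewrite mdegD ht mdegU; lia.
  apply: (lt_le_trans h1); rewrite lerDl.
  case: ifP => _; last by rewrite mulr0.
  by apply: mulr_ge0; [exact: ltW | exact: A_ge0].
have sbE' : (-1) ^+ (d - b) = -1 :> R by rewrite sgE hob.
have hodd : odd (b - a) = true by move: hpar; rewrite hoa hob; case: (odd (b - a)).
have hL2 : (2 <= L)%N.
  have : (d - b != 0)%N by apply/eqP => h; rewrite h in hob.
  rewrite /L; lia.
have hK3 : (3 <= K)%N by rewrite hKL; lia.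
have hal_le : forall i : 'I_n, (al <= be + U_(i) *+ L)%MM.
  move=> i; apply: contraT => hni.
  have hA : 0 < (S ^+ L)@_(U_(i) *+ L)%MM by apply: A_gt0; rewrite mdegU.
  have := hv (be + U_(i) *+ L)%MM.
  rewrite vE (negbTE hni) lem_addr [(be + _)%MM]addmC addmK sgA sbE' mulr0 add0r.
  by rewrite mulN1r mulNr oppr_ge0 leNgt (mulr_gt0 he hA).
have hle_ab := le_two i01 (hal_le i0) (hal_le i1).
set dl := (be - al)%MM.
have beE : be = (dl + al)%MM by rewrite /dl submK.
have hdl : mdeg dl = (b - a)%N by move: hbe; rewrite beE mdegD hal; lia.
pose W g := c * (S ^+ K)@_g - e * (if (dl <= g)%MM then (S ^+ L)@_(g - dl)%MM else 0).
have WE : forall g, v@_(g + al)%MM = W g.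
  move=> g; rewrite vE lem_addl addmK beE lem_add2r subm_add2r sgA sbE' mul1r mulN1r mulNr.
  by [].
have hW : forall g, 0 <= W g by move=> g; rewrite -WE; exact: hv.
have LX : forall g (q p : 'I_n), mdeg g = K -> (0 < g q)%N -> dl q = 0%N ->
    (0 < dl p)%N -> 0 < W g.
  move=> g q p hg hq hdq hdp.
  case hle : (dl <= g)%MM; last first.
    by rewrite /W hle mulr0 subr0; apply: mulr_gt0 => //; apply: A_gt0.
  pose eta := (g - dl)%MM.
  have hUq : (U_(q) <= eta)%MM by rewrite lep1mP /eta mnmBE hdq subn0 -lt0n.
  pose nu := (eta - U_(q))%MM.
  have gE : g = (dl + nu + U_(q))%MM by rewrite -addmA /nu submK // /eta addmC submK.
  have hpq : p != q by apply: contraTneq hdp => ->; rewrite hdq.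
  have hnu : mdeg (nu + U_(p))%MM = L.
    move: hg; rewrite gE !mdegD !mdeg1 hdl hKL => hg; clear -hg; lia.
  have hb2 : 0 < (S ^+ L)@_(nu + U_(p))%MM by exact: A_gt0.
  have e1 : forall x, (dl <= dl + nu + x)%MM by move=> x; rewrite -addmA lem_addr.
  have e2 : forall x, (dl + nu + x - dl = nu + x)%MM by move=> x; rewrite -addmA addmC addmK.
  have h' := hW (dl + nu + U_(p))%MM.
  rewrite /W e1 e2 in h'.
  rewrite /W gE e1 e2.
  have d1 := @A_deriv R n K (dl + nu)%MM q p.
  have d2 := @A_deriv R n L nu q p.
  rewrite !mnmDE hdq add0n -mulr_natr -[X in _ = X]mulr_natr in d1.
  rewrite -mulr_natr -[X in _ = X]mulr_natr in d2.
  have hx : 0 < ((nu q).+1)%:R :> R by rewrite ltr0n.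
  have hyw : ((nu p).+1)%:R < ((dl p + nu p).+1)%:R :> R.
    by rewrite ltr_nat; clear -hdp; lia.
  apply: (ex_arith hc he hb2 hx _ hyw d1 d2 h').
  by rewrite ler0n.
case: (boolP [exists r, dl r == 0%N]) => [/existsP [r /eqP hr] | ].
  have [p hp] : exists p : 'I_n, (0 < dl p)%N.
    apply/existsP; apply: contraT; rewrite negb_exists => /forallP h0.
    have : mdeg dl = 0%N.
      by rewrite mdegE big1 // => i _; move: (h0 i); rewrite lt0n negbK => /eqP.
    by rewrite hdl => h; rewrite h in hodd.
  apply: (@count_supp R n (mons n 3) (fun t => (t + U_(r) *+ (K - 3)) + al)%MM
    (U_(p) *+ 3)%MM v (mons_uniq n 3)).
    by move=> t1 t2 /addIm /addIm.
  move=> t; rewrite mons_mem => /eqP ht hne; rewrite WE; apply: lt0r_neq0.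
  have hg : mdeg (t + U_(r) *+ (K - 3))%MM = K.
    by rewrite mdegD ht mdegU; clear -hK3; lia.
  case hK : (0 < K - 3)%N.
    apply: (LX _ r p hg) => //.
    by rewrite mnmDE mulmnE mnm1E eqxx mul1n; clear -hK; lia.
  move/negbT: hK => hK.
  have hba1 : (b - a = 1)%N by clear -hKL hK hK3 hL2 hab; lia.
  have [p' /eqP hp'] : exists p', (dl == U_(p'))%MM by apply/mdeg1P; rewrite hdl hba1.
  have pp' : p' = p by move: hp; rewrite hp' mnm1E; case: eqP.
  have [q /andP [hq hqp]] : exists q, (0 < t q)%N && (q != p).
    apply/existsP; apply: contraT; rewrite negb_exists => /forallP hq.
    suff : t = (U_(p) *+ 3)%MM by move/eqP; rewrite (negbTE hne).
    apply: eq_le_mdeg; last by rewrite mdegU ht.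
    apply/mnm_lepP => j; rewrite mulmnE mnm1E.
    case: (eqVneq p j) => [<-|hpj].
      by rewrite mul1n -ht mdegE (bigD1 p) //= leq_addr.
    rewrite eq_sym in hpj.
    by move: (hq j); rewrite hpj andbT lt0n negbK => /eqP ->.
  apply: (LX _ q p hg) => //.
    by rewrite mnmDE; clear -hq; lia.
  by rewrite hp' mnm1E pp' eq_sym (negbTE hqp).
rewrite negb_exists => /forallP hd0.
have [r1 [r2 [x0 [hr12 hx0]]]] : exists r1 r2 x0, r1 != r2 /\
    (forall t, mdeg t = 3%N -> (0 < t r1)%N -> (forall s, s != r1 -> (dl s <= t s)%N) ->
       t = x0).
  case: (boolP [exists s, (1 < dl s)%N]) => [/existsP [s hs] | ].
    pose r1 := if s == i0 then i1 else i0.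
    have hr1 : r1 != s.
      rewrite /r1; case: (eqVneq s i0) => [->|hs0]; first by rewrite eq_sym.
      by rewrite eq_sym.
    exists r1, s, (U_(r1) + U_(s) *+ 2)%MM; split => // t ht h1 h2.
    symmetry; apply: eq_le_mdeg; last by rewrite mdegD mdeg1 mdegU ht.
    apply/mnm_lepP => j; rewrite mnmDE mulmnE !mnm1E.
    case: (eqVneq r1 j) => [e1|n1]; case: (eqVneq s j) => [e2|n2] /=.
    - by move: hr1; rewrite e1 e2 eqxx.
    - by rewrite -e1 addn0.
    - rewrite -e2 mul1n; apply: leq_trans hs _; apply: h2; by rewrite eq_sym.
    - by [].
  rewrite negb_exists => /forallP h1'.
  have hd1 : forall s, dl s = 1%N.
    by move=> s; move: (h1' s) (hd0 s); clear; lia.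
  have hdn : mdeg dl = n.
    rewrite mdegE (eq_bigr (fun _ => 1%N)); last by move=> i _; exact: hd1.
    by rewrite sum1_card card_ord.
  have hn3 : (2 < n)%N.
    have : n != 2%N by apply/eqP => h2; move: hodd; rewrite -hdl hdn h2.
    by clear -hn; lia.
  pose i2 : 'I_n := Ordinal hn3.
  exists i0, i1, (U_(i0) + U_(i1) + U_(i2))%MM; split => // t ht h1 h2.
  symmetry; apply: eq_le_mdeg; last by rewrite !mdegD !mdeg1 ht.
  apply/mnm_lepP => j.
  have htj : (1 <= t j)%N.
    case: (eqVneq j i0) => [->|hj] //.
    by rewrite -(hd1 j); apply: h2.
  rewrite !mnmDE !mnm1E -!val_eqE /=; move: htj.
  by case: (nat_of_ord j) => [|[|[|jj]]].
have hr21 : r2 != r1 by rewrite eq_sym.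
apply: (@count_supp R n (mons n 3)
   (fun t => (t + U_(if (0 < t r1)%N then r1 else r2) *+ (K - 3)) + al)%MM
   x0 v (mons_uniq n 3)).
  move=> t1 t2 /addIm.
  case h1 : (0 < t1 r1)%N; case h2 : (0 < t2 r1)%N => /=; try exact: addIm.
    move/mnmP/(_ r1); rewrite !mnmDE !mulmnE !mnm1E eqxx (negbTE hr21) mul1n mul0n addn0.
    by move=> E; move/negbT: h2; rewrite -E; clear -h1; lia.
  move/mnmP/(_ r1); rewrite !mnmDE !mulmnE !mnm1E eqxx (negbTE hr21) mul1n mul0n addn0.
  by move=> E; move/negbT: h1; rewrite E; clear -h2; lia.
move=> t; rewrite mons_mem => /eqP ht hne; rewrite WE; apply: lt0r_neq0.
suff hnle : ~~ (dl <= t + U_(if (0 < t r1)%N then r1 else r2) *+ (K - 3))%MM.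
  rewrite /W (negbTE hnle) mulr0 subr0; apply: mulr_gt0 => //; apply: A_gt0.
  by rewrite mdegD ht mdegU; clear -hK3; lia.
case h1 : (0 < t r1)%N.
  have [s /andP [hs1 hs2]] : exists s, (s != r1) && (t s < dl s)%N.
    apply/existsP; apply: contraT; rewrite negb_exists => /forallP hs.
    move: hne; rewrite (hx0 t ht h1) ?eqxx // => s hsr.
    by move: (hs s); rewrite hsr /= -leqNgt.
  apply/negP => /mnm_lepP /(_ s); rewrite mnmDE mulmnE mnm1E eq_sym (negbTE hs1).
  by rewrite mul0n addn0 leqNgt hs2.
apply/negP => /mnm_lepP /(_ r1); rewrite mnmDE mulmnE mnm1E (negbTE hr21) mul0n addn0.
by move: (hd0 r1) h1; clear; lia.
Qed.
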